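(* Let $k\ge 2$, $\boldsymbol\mu\in\mathbb{R}^k$, $\boldsymbol\Sigma$ a symmetric positive definite $k\times k$ matrix, $\mathbf{1}\in\mathbb{R}^k$ and $\mathbf{1}_n\in\mathbb{R}^n$ vectors of ones, and $\mathbf{Q}=\boldsymbol\Sigma^{-1}-\dfrac{\boldsymbol\Sigma^{-1}\mathbf{1}\mathbf{1}'\boldsymbol\Sigma^{-1}}{\mathbf{1}'\boldsymbol\Sigma^{-1}\mathbf{1}}$. Let $n\ge 2$, $\alpha_1,\dots,\alpha_n>0$, $\beta_1,\dots,\beta_n>0$ with $\sum_i\beta_i=1$, $\phi_1,\dots,\phi_n>0$; set $\boldsymbol\beta=(\beta_1,\dots,\beta_n)'$, $\mathbf{A}_0=\mathrm{diag}(\alpha_i)$, $\boldsymbol\Phi=\mathrm{diag}(\phi_i)$, $\mathbf{B}=\mathrm{diag}(\beta_i)$, $\bar\phi=\sum_i\beta_i\phi_i$, $\mathbf{A}=(\mathbf{A}_0+\boldsymbol\Phi)\mathbf{B}+(\bar\phi\mathbf{I}_n-2\boldsymbol\Phi)\boldsymbol\beta\boldsymbol\beta'$, $\mathbf{A}_\phi=(\mathbf{A}+\mathbf{A}')/2$. Let $\mathcal{W}^*$ be the maximizer over $k\times n$ matrices $\mathbf{W}$ of $\boldsymbol\beta'\mathbf{W}'\boldsymbol\mu-\frac12\operatorname{tr}(\mathbf{A}\mathbf{W}'\boldsymbol\Sigma\mathbf{W})$ subject to $\mathbf{W}'\mathbf{1}=\mathbf{1}_n$, namely $\mathcal{W}^*=\frac{\boldsymbol\Sigma^{-1}\mathbf{1}}{\mathbf{1}'\boldsymbol\Sigma^{-1}\mathbf{1}}\mathbf{1}_n'+\mathbf{Q}\boldsymbol\mu(\boldsymbol\beta'\mathbf{A}_\phi^{-1})$,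 and let $\boldsymbol\omega^*_{\mathbf f}=\mathcal{W}^*\boldsymbol\beta$ be the optimal fund weight vector. Then: (a) If the $\alpha_i$ are pairwise distinct and $\beta_i=1/n$ for all $i$, then $\mathbf{A}=n^{-2}\tilde{\mathbf{A}}$ with $\tilde{\mathbf{A}}=n(\mathbf{A}_0+\boldsymbol\Phi)+(\bar\phi\mathbf{I}_n-2\boldsymbol\Phi)\mathbf{1}_n\mathbf{1}_n'$ (here $\bar\phi=\frac1n\sum_i\phi_i$), and, with $\tilde{\mathbf{A}}_\phi=(\tilde{\mathbf{A}}+\tilde{\mathbf{A}}')/2$, $$\boldsymbol\omega^*_{\mathbf f}=\frac{\boldsymbol\Sigma^{-1}\mathbf{1}}{\mathbf{1}'\boldsymbol\Sigma^{-1}\mathbf{1}}+\mathbf{Q}\boldsymbol\mu\,(\mathbf{1}_n'\tilde{\mathbf{A}}_\phi^{-1}\mathbf{1}_n).$$ (b) If the $\alpha_i$ are pairwise distinct and $\phi_i=\phi>0$ for all $i$, then $\mathbf{A}=(\mathbf{A}_0+\phi\mathbf{I}_n)\mathbf{B}-\phi\boldsymbol\beta\boldsymbol\beta'$, which is symmetric and positive definite, and $$\boldsymbol\omega^*_{\mathbf f}=\frac{\boldsymbol\Sigma^{-1}\mathbf{1}}{\mathbf{1}'\boldsymbol\Sigma^{-1}\mathbf{1}}+\mathbf{Q}\boldsymbol\mu\,(\boldsymbol\beta'\mathbf{A}^{-1}\boldsymbol\beta).$$ (c) If $\alpha_i=\alpha$ and $\phi_i=\phi$ for all $i$, then $\boldsymbol\omega^*_{\mathbf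 f}$ coincides with the non-mimicking optimal fund weights $\boldsymbol\omega_{\mathbf f}=\frac{\boldsymbol\Sigma^{-1}\mathbf{1}}{\mathbf{1}'\boldsymbol\Sigma^{-1}\mathbf{1}}+\alpha_{\mathbf f}^{-1}\mathbf{Q}\boldsymbol\mu$ with $\alpha_{\mathbf f}=(\mathbf{1}_n'\mathbf{A}_0^{-1}\boldsymbol\beta)^{-1}$, i.e. $\boldsymbol\omega^*_{\mathbf f}=\frac{\boldsymbol\Sigma^{-1}\mathbf{1}}{\mathbf{1}'\boldsymbol\Sigma^{-1}\mathbf{1}}+\alpha^{-1}\mathbf{Q}\boldsymbol\mu$.
   Context: $\boldsymbol\mu,\boldsymbol\Sigma$ are the mean and covariance of returns of $k$ risky assets; $n$ investors have risk aversions $\alpha_i$, wealth shares $\beta_i$ and mimicking coefficients $\phi_i$; the objective is the wealth-weighted sum of the investors' mean-variance objectives, each penalized by $\frac{\phi_i}{2}(\mathbf{w}_i-\mathbf{W}\boldsymbol\beta)'\boldsymbol\Sigma(\mathbf{w}_i-\mathbf{W}\boldsymbol\beta)$, where $\mathbf{w}_i$ is column $i$ of $\mathbf{W}$. The vector $\boldsymbol\omega_{\mathbf f}$ is the maximizer of $\sum_i\beta_i(\mathbf{w}_i'\boldsymbol\mu-\frac{\alpha_i}{2}\mathbf{w}_i'\boldsymbol\Sigma\mathbf{w}_i)$ aggregated as $\mathbf{W}\boldsymbol\beta$ (no mimicking). *)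

(* Defs.v *)
From HB Require Import structures.
From mathcomp Require Import all_boot all_order all_algebra.
Set Implicit Arguments. Unset Strict Implicit. Unset Printing Implicit Defensive.
Import Order.TTheory GRing.Theory Num.Theory.
Local Open Scope ring_scope.

Definition onesv (R : ringType) (m : nat) : 'cV[R]_m := const_mx 1.

Definition sc (R : ringType) (M : 'M[R]_1) : R := M 0 0.

Definition posdef (R : numDomainType) (m : nat) (M : 'M[R]_m) : Prop :=
  forall x : 'cV[R]_m, x != 0 -> 0 < sc (x^T *m M *m x).

Section Model.
Variables (R : realFieldType) (k n : nat).
Implicit Types (Sigma : 'M[R]_k) (mu : 'cV[R]_k) (alpha beta phi : 'I_n -> R).

Definition gmv Sigma : 'cV[R]_k :=
  (sc ((onesv R k)^T *m invmx Sigma *m onesv R k))^-1 *: (invmx Sigma *m onesv R k).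

Definition Qmat Sigma : 'M[R]_k :=
  invmx Sigma -
  (sc ((onesv R k)^T *m invmx Sigma *m onesv R k))^-1 *:
     (invmx Sigma *m onesv R k *m (onesv R k)^T *m invmx Sigma).

Definition betav beta : 'cV[R]_n := \col_i beta i.
Definition A0mat alpha : 'M[R]_n := diag_mx (\row_i alpha i).
Definition Phimat phi : 'M[R]_n := diag_mx (\row_i phi i).
Definition Bmat beta : 'M[R]_n := diag_mx (\row_i beta i).
Definition phibar beta phi : R := \sum_i beta i * phi i.

Definition Amat alpha beta phi : 'M[R]_n :=
  (A0mat alpha + Phimat phi) *m Bmat beta
  + ((phibar beta phi)%:M - 2%:R *: Phimat phi) *m (betav beta *m (betav beta)^T).

Definition sympart (M : 'M[R]_n) : 'M[R]_n := (2%:R)^-1 *: (M + M^T).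

Definition Wstar Sigma mu alpha beta phi : 'M[R]_(k, n) :=
  gmv Sigma *m (onesv R n)^T
  + (Qmat Sigma *m mu) *m ((betav beta)^T *m invmx (sympart (Amat alpha beta phi))).

Definition omega_star Sigma mu alpha beta phi : 'cV[R]_k :=
  Wstar Sigma mu alpha beta phi *m betav beta.

Definition Atilde alpha phi : 'M[R]_n :=
  n%:R *: (A0mat alpha + Phimat phi)
  + (((n%:R)^-1 * \sum_i phi i)%:M - 2%:R *: Phimat phi)
      *m (onesv R n *m (onesv R n)^T).

Definition alpha_f alpha beta : R :=
  (sc ((onesv R n)^T *m invmx (A0mat alpha) *m betav beta))^-1.

Definition omega_f Sigma mu alpha beta : 'cV[R]_k :=
  gmv Sigma + (alpha_f alpha beta)^-1 *: (Qmat Sigma *m mu).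

End Model.

(* Main.v *)
Require Import Defs.
From HB Require Import structures.
From mathcomp Require Import all_boot all_order all_algebra.
From mathcomp Require Import ring lra.
Set Implicit Arguments. Unset Strict Implicit. Unset Printing Implicit Defensive.
Import Order.TTheory GRing.Theory Num.Theory.
Local Open Scope ring_scope.

Section H.
Variable R : realFieldType.

Lemma sc_mul11 (u v : 'M[R]_1) : sc (u *m v) = sc u * sc v.
Proof. by rewrite /sc mxE big_ord1. Qed.

Lemma sc_rc m (u : 'rV[R]_m) (w : 'cV[R]_m) : sc (u *m w) = \sum_i u 0 i * w i 0.
Proof. by rewrite /sc mxE. Qed.

Lemma mul_c11 m (v : 'cV[R]_m) (s : 'M[R]_1) : v *m s = sc s *: v.
Proof. apply/matrixP => i j; rewrite ord1 !mxE big_ord1 mulrC //. Qed.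

Lemma qdiag1 m (x z : 'cV[R]_m) (a : 'rV[R]_m) :
  sc (x^T *m diag_mx a *m z) = \sum_i x i 0 * a 0 i * z i 0.
Proof. rewrite sc_rc; apply: eq_bigr => i _; by rewrite mul_mx_diag !mxE. Qed.

Lemma qdiag2 m (x z : 'cV[R]_m) (a b : 'rV[R]_m) :
  sc (x^T *m (diag_mx a *m diag_mx b) *m z) = \sum_i x i 0 * a 0 i * b 0 i * z i 0.
Proof. rewrite mulmxA sc_rc; apply: eq_bigr => i _; by rewrite !mul_mx_diag !mxE. Qed.

Lemma diagD m (a b : 'rV[R]_m) : diag_mx a + diag_mx b = diag_mx (a + b).
Proof. apply/matrixP => i j; rewrite !mxE mulrnDl //. Qed.

Lemma diag_mul m (a b : 'rV[R]_m) :
  diag_mx a *m diag_mx b = diag_mx (\row_i (a 0 i * b 0 i)).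
Proof.
apply/matrixP => i j; rewrite mul_mx_diag !mxE.
by case: eqVneq => [->|_]; rewrite ?mulr1n ?mulr0n ?mul0r.
Qed.

Lemma scB (M N : 'M[R]_1) : sc (M - N) = sc M - sc N.
Proof. by rewrite /sc !mxE. Qed.
Lemma scZ (c : R) (M : 'M[R]_1) : sc (c *: M) = c * sc M.
Proof. by rewrite /sc !mxE. Qed.
Lemma scT (M : 'M[R]_1) : sc M^T = sc M.
Proof. by rewrite /sc !mxE. Qed.
Lemma scD (M N : 'M[R]_1) : sc (M + N) = sc M + sc N.
Proof. by rewrite /sc !mxE. Qed.
Variable n : nat.
Implicit Types (alpha beta phi : 'I_n -> R).

Lemma quadA alpha beta phi (x : 'cV[R]_n) :
  sc (x^T *m Amat alpha beta phi *m x) =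
  \sum_i alpha i * beta i * x i 0 ^+ 2 +
  \sum_i phi i * beta i * (x i 0 - \sum_j beta j * x j 0) ^+ 2.
Proof.
have E : forall (P B C : 'M[R]_n) (b : 'cV[R]_n), x^T *m (P *m B + C *m (b *m b^T)) *m x
   = x^T *m (P *m B) *m x + (x^T *m C *m b) *m (b^T *m x).
  by move=> P B C b; rewrite mulmxDr mulmxDl !mulmxA.
rewrite /Amat E scD sc_mul11 /A0mat /Phimat /Bmat diagD diag_mul qdiag1.
rewrite mulmxBr mulmxBl mul_mx_scalar -scalemxAl -scalemxAr -scalemxAl scB !scZ qdiag1.
rewrite !sc_rc /phibar.
set y := \sum_j beta j * x j 0.
have -> : \sum_i (betav beta)^T 0 i * x i 0 = y by apply: eq_bigr => i _; rewrite !mxE.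
have -> : \sum_i x^T 0 i * betav beta i 0 = y by apply: eq_bigr => i _; rewrite !mxE mulrC.
have -> : \sum_i x i 0 * (\row_i phi i) 0 i * betav beta i 0 = \sum_i phi i * beta i * x i 0
  by apply: eq_bigr => i _; rewrite !mxE; ring.
rewrite (eq_bigr (fun i => alpha i * beta i * x i 0 ^+ 2 + phi i * beta i * x i 0 ^+ 2));
  last by move=> i _; rewrite !mxE; ring.
rewrite big_split /=.
have -> : \sum_i phi i * beta i * (x i 0 - y) ^+ 2 =
   \sum_i phi i * beta i * x i 0 ^+ 2 - 2%:R * y * \sum_i phi i * beta i * x i 0
   + y ^+ 2 * \sum_i beta i * phi i.
  rewrite [2%:R * y * _]mulr_sumr [y ^+ 2 * _]mulr_sumr -sumrB -big_split; apply: eq_bigr => i _ /=; ring.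
ring.
Qed.
Lemma posdefA alpha beta phi :
  (forall i, 0 < alpha i) -> (forall i, 0 < beta i) -> (forall i, 0 < phi i) ->
  posdef (Amat alpha beta phi).
Proof.
move=> ha hb hp x /matrix0Pn [i [j Hij]]; move: Hij; rewrite ord1 => Hx.
rewrite quadA.
have h2 : 0 <= \sum_i phi i * beta i * (x i 0 - \sum_j beta j * x j 0) ^+ 2.
  by apply: sumr_ge0 => l _; rewrite mulr_ge0 ?sqr_ge0 // mulr_ge0 // ltW.
have h1 : 0 < \sum_i alpha i * beta i * x i 0 ^+ 2.
  rewrite (bigD1 i) //=.
  have : 0 <= \sum_(l | l != i) alpha l * beta l * x l 0 ^+ 2.
    by apply: sumr_ge0 => l _; rewrite mulr_ge0 ?sqr_ge0 // mulr_ge0 // ltW.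
  have : 0 < alpha i * beta i * x i 0 ^+ 2.
    by apply: mulr_gt0; [apply: mulr_gt0|rewrite lt0r sqrf_eq0 Hx sqr_ge0].
  lra.
lra.
Qed.

Lemma quad_sym m (M : 'M[R]_m) (x : 'cV[R]_m) :
  sc (x^T *m sympart M *m x) = sc (x^T *m M *m x).
Proof.
rewrite /sympart -scalemxAr -scalemxAl scZ mulmxDr mulmxDl scD.
have -> : x^T *m M^T *m x = (x^T *m M *m x)^T by rewrite !trmx_mul trmxK mulmxA.
rewrite scT.
have h2 : (2%:R : R) != 0 by rewrite pnatr_eq0.
by field.
Qed.

Lemma pd_unit m (M : 'M[R]_m) : posdef M -> M \in unitmx.
Proof.
move=> pd; rewrite -row_free_unit -kermx_eq0.
apply/idPn => /rowV0Pn [v /sub_kermxP vM vnz].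
have := pd v^T; rewrite trmx_eq0 => /(_ vnz).
by rewrite trmxK vM mul0mx /sc mxE ltxx.
Qed.

Lemma pd_sym_unit m (M : 'M[R]_m) : posdef M -> sympart M \in unitmx.
Proof. by move=> pd; apply: pd_unit => x /pd; rewrite quad_sym. Qed.

Lemma sym_id (M : 'M[R]_n) : M^T = M -> sympart M = M.
Proof.
move=> hM; rewrite /sympart hM; apply/matrixP => i j; rewrite !mxE.
have h2 : (2%:R : R) != 0 by rewrite pnatr_eq0.
by field.
Qed.

Lemma Aconst alpha beta phi ph : (forall i, phi i = ph) -> \sum_i beta i = 1 ->
  Amat alpha beta phi
  = (A0mat alpha + ph%:M) *m Bmat beta - ph *: (betav beta *m (betav beta)^T).
Proof.
move=> hp hs.
have hP : Phimat phi = ph%:M.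
  by rewrite /Phimat -diag_const_mx; congr diag_mx; apply/rowP => i; rewrite !mxE.
have hb : phibar beta phi = ph.
  by rewrite /phibar; under eq_bigr do rewrite hp; rewrite -mulr_suml hs mul1r.
rewrite /Amat hP hb mulmxBl -scalemxAl !mul_scalar_mx scalerA -scalerBl.
have -> : ph - 2%:R * ph = - ph by ring.
by rewrite scaleNr.
Qed.

Lemma Asym alpha beta phi ph : (forall i, phi i = ph) -> \sum_i beta i = 1 ->
  (Amat alpha beta phi)^T = Amat alpha beta phi.
Proof.
move=> hp hs; rewrite (Aconst _ hp hs) linearB /= linearZ /=.
by rewrite /A0mat /Bmat -diag_const_mx diagD diag_mul tr_diag_mx trmx_mul trmxK.
Qed.

Lemma omega_starE k Sigma (mu : 'cV[R]_k) alpha beta phi : \sum_i beta i = 1 ->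
  omega_star Sigma mu alpha beta phi =
  gmv Sigma + sc ((betav beta)^T *m invmx (sympart (Amat alpha beta phi)) *m betav beta)
     *: (Qmat Sigma *m mu).
Proof.
move=> hs; rewrite /omega_star /Wstar mulmxDl -!mulmxA !mul_c11 mulmxA.
have -> : sc ((onesv R n)^T *m betav beta) = 1.
  by rewrite sc_rc -hs; apply: eq_bigr => i _; rewrite !mxE mul1r.
by rewrite scale1r scalemxAr.
Qed.

Lemma trZ p q (c : R) (M : 'M[R]_(p, q)) : (c *: M)^T = c *: M^T.
Proof. by apply/matrixP => i j; rewrite !mxE. Qed.

Lemma sc3 (u : 'cV[R]_n) (X : 'M[R]_n) (c d : R) :
  sc ((c *: u)^T *m (d *: X) *m (c *: u)) = c * d * c * sc (u^T *m X *m u).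
Proof.
have -> : (c *: u)^T = c *: u^T by apply/matrixP => i j; rewrite !mxE.
rewrite -?scalemxAr -?scalemxAl -?scalemxAr -?scalemxAl !scZ; ring. Qed.
End H.

Theorem corollary1 (R : realFieldType) (k n : nat)
  (mu : 'cV[R]_k) (Sigma : 'M[R]_k) (alpha beta phi : 'I_n -> R) :
  (2 <= k)%N -> Sigma^T = Sigma -> posdef Sigma ->
  (2 <= n)%N ->
  (forall i, 0 < alpha i) -> (forall i, 0 < beta i) -> \sum_i beta i = 1 ->
  (forall i, 0 < phi i) ->
  [/\
   (* (a) *)
   (injective alpha -> (forall i, beta i = (n%:R)^-1) ->
      Amat alpha beta phi = ((n%:R) ^+ 2)^-1 *: Atilde alpha phi /\
      omega_star Sigma mu alpha beta phi =
        gmv Sigma + sc ((onesv R n)^T *m invmx (sympart (Atilde alpha phi)) *m onesv R n)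
                      *: (Qmat Sigma *m mu)),
   (* (b) *)
   (injective alpha -> forall ph : R, 0 < ph -> (forall i, phi i = ph) ->
      [/\ Amat alpha beta phi
            = (A0mat alpha + ph%:M) *m Bmat beta - ph *: (betav beta *m (betav beta)^T),
          (Amat alpha beta phi)^T = Amat alpha beta phi,
          posdef (Amat alpha beta phi) &
          omega_star Sigma mu alpha beta phi =
            gmv Sigma + sc ((betav beta)^T *m invmx (Amat alpha beta phi) *m betav beta)
                          *: (Qmat Sigma *m mu)]) &
   (* (c) *)
   (forall a ph : R, (forall i, alpha i = a) -> (forall i, phi i = ph) ->
      omega_star Sigma mu alpha beta phi = omega_f Sigma mu alpha beta /\
      omega_star Sigma mu alpha beta phi = gmv Sigma + a^-1 *: (Qmat Sigma *m mu))].
Proof.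
move=> hk hS pdS hn ha hb hs hp.
have hpdA := posdefA ha hb hp.
have hU := pd_sym_unit hpdA.
have h0 : (0 < n)%N by apply: leq_trans hn.
split.
- move=> _ hbn.
  set N : R := n%:R.
  have hN : N != 0 by rewrite /N pnatr_eq0 -lt0n.
  have hbv : betav beta = N^-1 *: onesv R n
    by apply/matrixP => i j; rewrite !mxE hbn mulr1.
  have hB : Bmat beta = N^-1%:M
    by rewrite /Bmat -diag_const_mx; congr diag_mx; apply/rowP => i; rewrite !mxE hbn.
  have hphi : phibar beta phi = N^-1 * \sum_i phi i
    by rewrite /phibar mulr_sumr; apply: eq_bigr => i _; rewrite hbn.
  have HA : Amat alpha beta phi = (N ^+ 2)^-1 *: Atilde alpha phi.
    rewrite /Amat /Atilde -/N hB hbv hphi mul_mx_scalar trZ.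
    rewrite -!scalemxAl -!scalemxAr scalerA; apply/matrixP => i j; rewrite !mxE.
    by field.
  split => //.
  rewrite omega_starE //.
  have HS : sympart (Amat alpha beta phi) = (N ^+ 2)^-1 *: sympart (Atilde alpha phi)
    by rewrite /sympart HA trZ -scalerDr !scalerA mulrC.
  rewrite HS in hU *.
  rewrite invmxZ // hbv sc3.
  congr (_ + _ *: _); field; exact: hN.
- move=> _ ph hph hpi.
  have hsym := Asym alpha hpi hs.
  split => //; first exact: Aconst.
  by rewrite omega_starE // sym_id.
- move=> a ph hal hpi.
  have hsym := Asym alpha hpi hs.
  have hA0 : A0mat alpha = a%:M
    by rewrite /A0mat -diag_const_mx; congr diag_mx; apply/rowP => i; rewrite !mxE.
  have ha0 : 0 < a by rewrite -(hal (Ordinal h0)).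
  have hU' : Amat alpha beta phi \in unitmx by rewrite -(sym_id hsym).
  have hB1 : Bmat beta *m onesv R n = betav beta
    by apply/matrixP => i j; rewrite ord1 mul_diag_mx !mxE mulr1.
  have hb1 : sc ((betav beta)^T *m onesv R n) = 1
    by rewrite sc_rc -hs; apply: eq_bigr => i _; rewrite !mxE mulr1.
  have hb1' : sc ((onesv R n)^T *m betav beta) = 1
    by rewrite sc_rc -hs; apply: eq_bigr => i _; rewrite !mxE mul1r.
  have hA1 : Amat alpha beta phi *m onesv R n = a *: betav beta.
    rewrite (Aconst _ hpi hs) hA0 mulmxBl -!mulmxA hB1 mulmxDl !mul_scalar_mx.
    by rewrite -scalemxAl -mulmxA mul_c11 hb1 scale1r addrK.
  have hAv : invmx (Amat alpha beta phi) *m betav beta = a^-1 *: onesv R n.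
    have ha0' : a != 0 by rewrite gt_eqF.
    by rewrite -[betav beta](scalerK ha0') -hA1 scalemxAr mulKmx.
  have E : omega_star Sigma mu alpha beta phi = gmv Sigma + a^-1 *: (Qmat Sigma *m mu).
    rewrite omega_starE // sym_id // -mulmxA hAv -scalemxAr scZ hb1 mulr1 //.
  split => //.
  rewrite E /omega_f /alpha_f hA0 invmx_scalar mul_mx_scalar -scalemxAl scZ hb1' mulr1 invrK //.
Qed.
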